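(* Let $k>1$ be an integer and let $n$ be a pseudoprime of basis $k$. Let $\Pi_n$ denote the number of periodic points of prime period $n$ of the circle map $f(\theta)=k\theta \pmod{2\pi}$. Then $$\frac{k^{n}-k-\Pi_n}{n}\in\mathbb{N}.$$
   Context: A positive integer $n$ is called a pseudoprime of basis $k$ (where $k>1$ is an integer) if $n$ is an odd composite number, $\gcd(n,k)=1$, and $k^{n-1}\equiv 1 \pmod n$. The circle map with parameter $k$ is $f:S^1\to S^1$, $f(\theta)=k\theta \pmod{2\pi}$, where $\theta\in[0,2\pi)$ is the angular coordinate on the unit circle $S^1$. A point $\theta$ is a periodic point of prime (i.e. least) period $n$ if $f^{n}(\theta)=\theta$ and $f^{m}(\theta)\neq\theta$ for $0<m<n$; $\Pi_n$ is the number of such points. $\mathbb{N}$ denotes the positive integers. *)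

(* Defs.v *)
From Stdlib Require Import Reals Lra Lia ZArith Arith List Znumtheory.
Open Scope R_scope.

Definition pseudoprime (k n : nat) : Prop :=
  Nat.odd n = true /\
  (1 < n)%nat /\ ~ prime (Z.of_nat n) /\
  Nat.gcd n k = 1%nat /\
  ((k ^ (n - 1)) mod n = 1 mod n)%nat.

Definition mod2pi (x : R) : R :=
  x - 2 * PI * IZR (Int_part (x / (2 * PI))).

Definition circle_map (k : nat) (theta : R) : R := mod2pi (INR k * theta).

Definition prime_period_point (k n : nat) (theta : R) : Prop :=
  0 <= theta < 2 * PI /\
  Nat.iter n (circle_map k) theta = theta /\
  (forall m : nat, (0 < m < n)%nat -> Nat.iter m (circle_map k) theta <> theta).

(* Main.v *)
Require Import Defs.
From Stdlib Require Import Reals ZArith List.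
From Stdlib Require Import Lra Lia Znumtheory.
From mathcomp Require ssreflect ssrbool ssrnat eqtype seq fintype fingraph div finset bigop zify.
Module MC.
Set Warnings "-notation-overridden,-hiding-delimiting-key".
Import ssreflect ssrfun ssrbool ssrnat eqtype seq choice fintype fingraph div finset bigop binomial zify.
Local Open Scope nat_scope.

Definition g (N k j : nat) := (k * j) %% N.

Lemma in_In (s : seq nat) x : (x \in s) <-> List.In x s.
Proof.
elim: s => [|y s IH] //=; rewrite in_cons; split.
- by case/orP=> [/eqP ->|/IH]; [left|right].
- by case=> [->|/IH ->]; rewrite ?eqxx ?orbT.
Qed.

Lemma uniq_NoDup (s : seq nat) : uniq s -> List.NoDup s.
Proof.
elim: s => [|y s IH] /=; first by constructor.
case/andP=> hy hs; constructor; last exact: IH.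
by move/in_In; rewrite (negbTE hy).
Qed.

Lemma length_size (T : Type) (s : seq T) : List.length s = size s.
Proof. by elim: s => //= x s ->. Qed.

Lemma pow_expn k n : Nat.pow k n = k ^ n.
Proof. by elim: n => // n IH; rewrite expnS -IH. Qed.

Lemma g_spec N k j : (0 < N)%coq_nat ->
  (g N k j < N)%coq_nat /\ (k * j = (k * j %/ N) * N + g N k j)%coq_nat.
Proof.
move=> /ltP hN; split; first by apply/ltP; exact: ltn_pmod.
exact: divn_eq.
Qed.

Section S.
Variables k n d e : nat.
Hypothesis hk : 1 < k.
Hypothesis hd : 1 < d.
Hypothesis hdn : d < n.
Hypothesis hde : n = d * e.

Let N := k ^ n - 1.

Lemma kn_big : k ^ 2 <= k ^ n.
Proof. apply: leq_pexp2l; lia. Qed.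

Lemma N_gt0 : 0 < N.
Proof. have := kn_big. rewrite /N. have : 4 <= k ^ 2 by rewrite (expnS k 1) expn1; nia. lia. Qed.

Lemma iter_g m j : j < N -> iter m (g N k) j = (k ^ m * j) %% N.
Proof.
move=> hj; elim: m => [|m IH]; first by rewrite /= mul1n modn_small.
by rewrite iterS IH /g modnMmr expnS mulnA.
Qed.

Definition f (i : 'I_N) : 'I_N := Ordinal (ltn_pmod (k * i) N_gt0).

Lemma val_iter m (i : 'I_N) : val (iter m f i) = iter m (g N k) (val i).
Proof. by elim: m => [|m IH] //=; rewrite IH. Qed.

Lemma knN : k ^ n = N + 1.
Proof. have := N_gt0; rewrite /N; lia. Qed.

Lemma iter_n (i : 'I_N) : iter n f i = i.
Proof.
apply: val_inj; rewrite val_iter (iter_g n _ (ltn_ord i)) knN mulnDl mul1n (mulnC N) modnMDl modn_small //; exact: ltn_ord.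
Qed.

Lemma f_inj : injective f.
Proof.
move=> i j hij.
have hn : n = n.-1.+1 by lia.
by rewrite -(iter_n i) -(iter_n j) hn !iterSr hij.
Qed.

Lemma order_char (i : 'I_N) :
  (order f i == n) = [forall m : 'I_n, (0 < m) ==> (iter m f i != i)].
Proof.
have H1 : forall m, 0 < m < order f i -> iter m f i != i.
  move=> m /andP[m0 mo]; apply/eqP=> he.
  have := findex_iter mo; rewrite he findex0; lia.
apply/eqP/forallP.
  move=> <- m; apply/implyP=> m0; apply: H1; rewrite m0; exact: ltn_ord.
move=> H.
have o0 := order_gt0 f i.
case: (ltngtP (order f i) n) => // h.
  have := H (Ordinal h); rewrite o0 /= (iter_order f_inj) eqxx; done.
have hn : 0 < n by lia.
have := H1 n; rewrite hn h /= (iter_n i) eqxx => /(_ isT); done.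
Qed.

Definition Aset := [set i : 'I_N | order f i == n].

Lemma card_div : n %| #|Aset|.
Proof.
have := @fcard_order_set _ f f_inj n (mem Aset).
rewrite -/(fcard f Aset).
move=> H; rewrite -H; first exact: dvdn_mull.
- by apply/subsetP=> x; rewrite inE.
- move=> x y /eqP <-; rewrite !inE.
  suff -> : order f (f x) = order f x by [].
  rewrite /order; apply/esym/eq_card; exact: same_fconnect1 f_inj x.
Qed.

Let D := k ^ d - 1.

Lemma D_gt0 : 0 < D.
Proof. have : k ^ 2 <= k ^ d by apply: leq_pexp2l; lia.
 rewrite /D. have : 4 <= k ^ 2 by rewrite (expnS k 1) expn1; nia. lia. Qed.

Lemma DdivN : exists M, N = D * M.
Proof.
exists (\sum_(i < e) (k ^ d) ^ i).
rewrite /N /D hde expnM.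
have h1 : forall x, x - 1 = x.-1 by move=> x; lia.
by rewrite !h1 predn_exp.
Qed.

Definition Qset := [set i : 'I_N | iter d f i == i].

Lemma AQ0 : Aset :&: Qset = set0.
Proof.
apply/setP=> i; rewrite !inE; apply/negbTE; apply/negP=> /andP[ho hq].
move: ho; rewrite order_char => /forallP /(_ (Ordinal hdn)) /=.
rewrite hq; have -> : 0 < d by lia. done.
Qed.

Lemma Qbig : D <= #|Qset|.
Proof.
have [M hM] := DdivN.
have M0 : 0 < M by have := N_gt0; rewrite hM; nia.
have hlt : forall t : 'I_D, t * M < N.
  by move=> t; rewrite hM; have := ltn_ord t; nia.
pose h (t : 'I_D) : 'I_N := Ordinal (hlt t).
have hinj : injective h.
  move=> t t' /(congr1 val) /= /eqP; rewrite eqn_pmul2r // => /eqP; exact: val_inj.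
have <- : #|[set h x | x in 'I_D]| = D by rewrite card_imset // card_ord.
apply: subset_leq_card; apply/subsetP=> _ /imsetP[t _ ->].
rewrite inE; apply/eqP/val_inj; rewrite val_iter iter_g //=.
have -> : k ^ d = D + 1 by have := D_gt0; rewrite /D; lia.
rewrite mulnDl mul1n mulnA (mulnC D) -mulnA -hM modnMDl modn_small //.
Qed.

Lemma Abound : #|Aset| + D <= N.
Proof.
have := cardsU Aset Qset; rewrite AQ0 cards0 subn0 => e1.
have := max_card (Aset :|: Qset); rewrite card_ord e1. have := Qbig. lia.
Qed.

Lemma comb_in :
  exists s : list nat, List.NoDup s /\
   (forall j, List.In j s <->
      ((j < Nat.sub (Nat.pow k n) 1)%coq_nat /\
       iter n (g (Nat.sub (Nat.pow k n) 1) k) j = j /\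
       forall m, (0 < m)%coq_nat /\ (m < n)%coq_nat -> iter m (g (Nat.sub (Nat.pow k n) 1) k) j <> j)) /\
   (exists q, List.length s = (q * n)%coq_nat) /\
   (List.length s + k + 1 <= Nat.sub (Nat.pow k n) 1)%coq_nat.
Proof.
have EN : Nat.sub (Nat.pow k n) 1 = k ^ n - 1 by rewrite pow_expn.
rewrite EN.
exists (map val (enum Aset)).
split; first by apply: uniq_NoDup; rewrite map_inj_uniq ?enum_uniq //; exact: val_inj.
split.
  move=> j; rewrite -in_In; split.
  - case/mapP=> i; rewrite mem_enum inE => ho ->.
    split; first by apply/ltP; exact: ltn_ord.
    split; first by rewrite -val_iter iter_n.
    move=> m [/ltP m0 /ltP mn] he.
    move: ho; rewrite order_char => /forallP /(_ (Ordinal mn)) /=.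
    rewrite m0 /=; apply/negP; rewrite negbK; apply/eqP/val_inj.
    by rewrite val_iter.
  - case=> /ltP hj [_ hm]; apply/mapP; exists (Ordinal hj) => //.
    rewrite mem_enum inE order_char; apply/forallP=> m; apply/implyP=> m0.
    apply/eqP=> /(congr1 val); rewrite val_iter /=; apply: hm; split; apply/ltP => //.
split.
  have := card_div => /dvdnP [q hq].
  by exists q; rewrite length_size size_map -cardE hq.
have := Abound.
rewrite length_size size_map cardE.
have : k ^ 2 <= k ^ d by apply: leq_pexp2l; lia.
rewrite (expnS k 1) expn1 => h1 h2; rewrite /D in h2; rewrite -/N; have h3 : k + 2 <= k * k by nia. apply/leP. set c := size (enum Aset) in h2 *. clearbody c D N. lia.
Qed.

End S.

Lemma comb k n d e : (1 < k)%coq_nat -> (1 < d)%coq_nat -> (d < n)%coq_nat ->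
  n = (d * e)%coq_nat ->
  exists s : list nat, List.NoDup s /\
   (forall j, List.In j s <->
      ((j < Nat.sub (Nat.pow k n) 1)%coq_nat /\
       iter n (g (Nat.sub (Nat.pow k n) 1) k) j = j /\
       forall m, (0 < m)%coq_nat /\ (m < n)%coq_nat -> iter m (g (Nat.sub (Nat.pow k n) 1) k) j <> j)) /\
   (exists q, List.length s = (q * n)%coq_nat) /\
   (List.length s + k + 1 <= Nat.sub (Nat.pow k n) 1)%coq_nat.
Proof.
move=> /ltP hk /ltP hd /ltP hdn hde. exact (comb_in k n d e hk hd hdn hde).
Qed.


End MC.

Section Real.
Open Scope R_scope.

Lemma mod2pi_shift (y : R) (z : Z) : 0 <= y < 2 * PI -> mod2pi (y + 2 * PI * IZR z) = y.
Proof.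
  intros [h0 h1]. unfold mod2pi.
  assert (hp : 0 < PI) by exact PI_RGT_0.
  assert (E : (y + 2 * PI * IZR z) / (2 * PI) = y / (2 * PI) + IZR z) by (field; lra).
  rewrite E.
  set (r := y / (2 * PI) + IZR z).
  assert (hr0 : 0 <= y / (2 * PI)) by (apply Rmult_le_pos; [lra | left; apply Rinv_0_lt_compat; lra]).
  assert (hr1 : y / (2 * PI) < 1).
  { apply (Rmult_lt_reg_r (2 * PI)); [lra|]. unfold Rdiv. rewrite Rmult_assoc, Rinv_l by lra. lra. }
  destruct (base_Int_part r) as [b1 b2].
  assert (w1 : (Int_part r < z + 1)%Z).
  { apply lt_IZR. rewrite plus_IZR. simpl. unfold r in *. lra. }
  assert (w2 : (z < Int_part r + 1)%Z).
  { apply lt_IZR. rewrite plus_IZR. simpl. unfold r in *. lra. }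
  assert (Int_part r = z) by lia.
  rewrite H. ring.
Qed.

Lemma mod2pi_form (x : R) : exists z : Z, mod2pi x = x - 2 * PI * IZR z.
Proof. exists (Int_part (x / (2 * PI))). reflexivity. Qed.

Lemma iter_form (k m : nat) (th : R) :
  exists z : Z, Nat.iter m (circle_map k) th = INR k ^ m * th - 2 * PI * IZR z.
Proof.
  induction m as [|m [z IH]].
  - exists 0%Z. simpl. ring.
  - destruct (mod2pi_form (INR k * Nat.iter m (circle_map k) th)) as [z' Hz'].
    exists (Z.of_nat k * z + z')%Z.
    change (Nat.iter (S m) (circle_map k) th) with (circle_map k (Nat.iter m (circle_map k) th)).
    assert (C : circle_map k (Nat.iter m (circle_map k) th) =
      INR k * Nat.iter m (circle_map k) th - 2 * PI * IZR z') by exact Hz'.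
    rewrite C, IH, plus_IZR, mult_IZR, <- INR_IZR_INZ. simpl. ring.
Qed.

Definition theta (N j : nat) : R := 2 * PI * INR j / INR N.

Lemma theta_bound (N j : nat) : (j < N)%nat -> 0 <= theta N j < 2 * PI.
Proof.
  intros hj. unfold theta.
  assert (hp : 0 < PI) by exact PI_RGT_0.
  assert (hN : 0 < INR N) by (apply lt_0_INR; lia).
  assert (hjN : INR j < INR N) by (apply lt_INR; lia).
  assert (0 <= INR j) by apply pos_INR.
  split.
  - unfold Rdiv. apply Rmult_le_pos; [|left; apply Rinv_0_lt_compat; lra]. nra.
  - apply (Rmult_lt_reg_r (INR N)); [lra|]. unfold Rdiv. rewrite Rmult_assoc, Rinv_l by lra. nra.
Qed.

Lemma theta_inj (N j j' : nat) : (0 < N)%nat -> theta N j = theta N j' -> j = j'.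
Proof.
  intros hN H. unfold theta in H.
  assert (hp : 0 < PI) by exact PI_RGT_0.
  assert (hN' : 0 < INR N) by (apply lt_0_INR; lia).
  apply INR_eq.
  assert (H2 : 2 * PI * INR j = 2 * PI * INR j').
  { apply (Rmult_eq_reg_r (/ INR N)); [exact H|]. apply Rgt_not_eq, Rinv_0_lt_compat. lra. }
  apply (Rmult_eq_reg_l (2 * PI)); [exact H2|lra].
Qed.

Lemma circle_theta (k N j : nat) : (0 < N)%nat -> (j < N)%nat ->
  circle_map k (theta N j) = theta N (MC.g N k j).
Proof.
  intros hN hj. destruct (MC.g_spec N k j hN) as [hr hq].
  assert (hp : 0 < PI) by exact PI_RGT_0.
  assert (hN' : 0 < INR N) by (apply lt_0_INR; lia).
  unfold circle_map.
  set (r := MC.g N k j) in *. set (q := div.divn (k * j) N) in *.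
  assert (E : INR k * theta N j = theta N r + 2 * PI * IZR (Z.of_nat q)).
  { unfold theta. rewrite <- INR_IZR_INZ.
    assert (E2 : INR k * INR j = INR q * INR N + INR r).
    { rewrite <- !mult_INR, <- plus_INR. f_equal. exact hq. }
    assert (Er : INR r = INR k * INR j - INR q * INR N) by lra.
    rewrite Er. field. lra. }
  rewrite E. apply mod2pi_shift. apply theta_bound. exact hr.
Qed.

Lemma g_iter_lt (k N j m : nat) : (0 < N)%nat -> (j < N)%nat ->
  (ssrnat.iter m (MC.g N k) j < N)%nat.
Proof.
  intros hN hj. induction m as [|m IH]; [exact hj|].
  change (ssrnat.iter (S m) (MC.g N k) j) with (MC.g N k (ssrnat.iter m (MC.g N k) j)).
  apply (MC.g_spec N k _ hN).
Qed.

Lemma iter_theta (k N j m : nat) : (0 < N)%nat -> (j < N)%nat ->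
  Nat.iter m (circle_map k) (theta N j) = theta N (ssrnat.iter m (MC.g N k) j).
Proof.
  intros hN hj. induction m as [|m IH]; [reflexivity|].
  change (Nat.iter (S m) (circle_map k) (theta N j)) with (circle_map k (Nat.iter m (circle_map k) (theta N j))).
  change (ssrnat.iter (S m) (MC.g N k) j) with (MC.g N k (ssrnat.iter m (MC.g N k) j)).
  rewrite IH. apply circle_theta; [exact hN|]. apply g_iter_lt; assumption.
Qed.

End Real.

Lemma NoDup_map_theta (N : nat) (s : list nat) : (0 < N)%nat ->
  (forall j, In j s -> (j < N)%nat) -> NoDup s -> NoDup (map (theta N) s).
Proof.
  intros hN hs hd. induction hd as [|x s hx hd IH]; simpl; constructor.
  - intros H. apply in_map_iff in H as [y [hy hin]].
    apply theta_inj in hy; [subst; contradiction | exact hN].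
  - apply IH. intros j hj. apply hs. now right.
Qed.

Theorem theorem1 (k n : nat) (hk : (1 < k)%nat) (hn : pseudoprime k n) :
  exists l : list R,
    NoDup l /\
    (forall theta : R, In theta l <-> prime_period_point k n theta) /\
    exists m : nat, (1 <= m)%nat /\
      (Z.of_nat k ^ Z.of_nat n - Z.of_nat k - Z.of_nat (length l))%Z
        = (Z.of_nat n * Z.of_nat m)%Z.
Proof.
  destruct hn as [hodd [hn1 [hnp [hgcd hmod]]]].
  destruct (not_prime_divide (Z.of_nat n)) as [z [[hz1 hz2] [c hc]]]; [lia | exact hnp |].
  assert (hc0 : (0 <= c)%Z) by nia.
  set (d := Z.to_nat z). set (e := Z.to_nat c).
  assert (hd : (1 < d)%nat) by lia.
  assert (hdn : (d < n)%nat) by lia.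
  assert (hde : n = (d * e)%nat).
  { apply Nat2Z.inj. rewrite Nat2Z.inj_mul. unfold d, e. rewrite !Z2Nat.id by lia. lia. }
  destruct (MC.comb k n d e hk hd hdn hde) as [s [hs1 [hs2 [[q hq] hs4]]]].
  set (N := (Nat.pow k n - 1)%nat) in *.
  assert (hN : (0 < N)%nat) by lia.
  exists (map (theta N) s).
  split.
  { apply NoDup_map_theta; [exact hN | | exact hs1]. intros j hj. apply hs2 in hj. tauto. }
  split.
  { intros th. rewrite in_map_iff. split.
    - intros [j [<- hj]]. apply hs2 in hj as [hjN [hit hm]].
      split; [apply theta_bound; exact hjN|]. split.
      + rewrite iter_theta by assumption. now rewrite hit.
      + intros m hm' H. rewrite iter_theta in H by assumption.
        apply theta_inj in H; [|exact hN]. apply (hm m); [lia | exact H].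
    - intros [hb [hit hm]].
      destruct (iter_form k n th) as [z' hz].
      assert (hp : (0 < PI)%R) by exact PI_RGT_0.
      assert (hINR : (INR N = INR k ^ n - 1)%R).
      { unfold N. rewrite minus_INR by lia. rewrite pow_INR. reflexivity. }
      assert (hNp : (0 < INR N)%R) by (apply lt_0_INR; lia).
      assert (E : (th * INR N = 2 * PI * IZR z')%R).
      { rewrite hINR. rewrite hit in hz. nra. }
      assert (hz0 : (0 <= IZR z')%R) by nra.
      assert (hzN : (IZR z' < INR N)%R) by nra.
      apply le_IZR in hz0. rewrite INR_IZR_INZ in hzN. apply lt_IZR in hzN.
      exists (Z.to_nat z').
      assert (hjN : (Z.to_nat z' < N)%nat) by lia.
      assert (hth : th = theta N (Z.to_nat z')).
      { unfold theta. rewrite INR_IZR_INZ, Z2Nat.id by lia.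
        apply (Rmult_eq_reg_r (INR N)); [|lra]. unfold Rdiv.
        rewrite Rmult_assoc, Rinv_l by lra. lra. }
      split; [symmetry; exact hth|].
      apply hs2. split; [exact hjN|]. subst th. split.
      + apply (theta_inj N); [exact hN|]. rewrite <- iter_theta by assumption. exact hit.
      + intros m hm' H. apply (hm m); [lia|].
        rewrite iter_theta by assumption. now rewrite H. }
  assert (hs4' : (length s + k + 1 <= N)%nat) by exact hs4.
  rewrite length_map, hq. rewrite hq in hs4'. unfold N in hs4'.
  set (P := Nat.pow k (n - 1)).
  assert (h1n : (1 mod n = 1)%nat) by (apply Nat.mod_small; lia).
  assert (hP : P = (n * (P / n) + 1)%nat).
  { pose proof (Nat.div_mod_eq P n) as HH. fold P in hmod. rewrite hmod, h1n in HH. exact HH. }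
  assert (hkn : Nat.pow k n = (k * P)%nat).
  { unfold P. replace n with (S (n - 1)) at 1 by lia. reflexivity. }
  set (c' := (P / n)%nat) in *.
  assert (hlt : (q < k * c')%nat).
  { assert (Hx : (q * n + k + 1 <= k * (n * c' + 1) - 1)%nat) by (rewrite <- hP, <- hkn; exact hs4').
    nia. }
  exists (k * c' - q)%nat. split; [lia|].
  rewrite <- Nat2Z.inj_pow, hkn, hP.
  rewrite Nat2Z.inj_sub by lia.
  rewrite !Nat2Z.inj_mul, Nat2Z.inj_add, Nat2Z.inj_mul. lia.
Qed.
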